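(* Let $(d_1,\ldots,d_n)$ be a tree degree sequence with $n\geq 3$, let $V=\{v_1,\ldots,v_n\}$, and let $X\subseteq V$ be such that (i) $d_i>1$ for every $v_i\in X$, (ii) $|X|\leq n/2$, and (iii) $\sum_{i:v_i\in X}d_i\geq \sum_{i:v_i\in V\setminus X}d_i$. Then there is a tree $T$ with vertex set $V$ such that $d_T(v_i)=d_i$ for every $v_i\in V$ and $X$ is a minimum vertex cover of $T$.
   Context: All graphs are finite, simple and undirected. The degree sequence of a graph is the nonincreasing sequence of its vertex degrees (so $d_1\geq\cdots\geq d_n$). A tree degree sequence is the degree sequence of some tree. $d_T(v)$ denotes the degree of $v$ in $T$. *)

(* Defs.v *)
From mathcomp Require Import all_boot.
Set Implicit Arguments. Unset Strict Implicit. Unset Printing Implicit Defensive.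

Definition simple_graph (T : finType) (e : rel T) : Prop :=
  irreflexive e /\ symmetric e.

Definition connected (T : finType) (e : rel T) : Prop :=
  forall x y : T, connect e x y.

Definition acyclic (T : finType) (e : rel T) : Prop :=
  forall p : seq T, uniq p -> 2 < size p -> ~~ cycle e p.

Definition is_tree (T : finType) (e : rel T) : Prop :=
  [/\ simple_graph e, connected e & acyclic e].

Definition deg (T : finType) (e : rel T) (v : T) : nat := #|[set w | e v w]|.

Definition is_vertex_cover (T : finType) (e : rel T) (X : {set T}) : Prop :=
  forall x y, e x y -> (x \in X) || (y \in X).

Definition is_min_vertex_cover (T : finType) (e : rel T) (X : {set T}) : Prop :=
  is_vertex_cover e X /\ forall Y : {set T}, is_vertex_cover e Y -> #|X| <= #|Y|.

Definition is_tree_degree_sequence (n : nat) (d : 'I_n -> nat) : Prop :=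
  (forall i j : 'I_n, i <= j -> d j <= d i) /\
  exists e : rel 'I_n, is_tree e /\ forall v, deg e v = d v.

(* Main.v *)
Require Import Defs.
From mathcomp Require Import all_boot zify.
Set Implicit Arguments. Unset Strict Implicit. Unset Printing Implicit Defensive.

Section Count.
Variable T : finType.
Variable e : rel T.
Hypothesis irr : irreflexive e.
Hypothesis sym : symmetric e.
Hypothesis acy : acyclic e.

Definition rS (S : {set T}) : rel T := fun a b => [&& e a b, a \in S & b \in S].
Definition degS (S : {set T}) v := #|[set y in S | e v y]|.
Definition conS (S : {set T}) := forall x y, x \in S -> y \in S -> connect (rS S) x y.

Lemma rS_e (S : {set T}) : subrel (rS S) e.
Proof. by move=> a b /and3P[]. Qed.

Lemma path_rS_in (S : {set T}) x p : x \in S -> path (rS S) x p -> all (mem S) (x :: p).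
Proof.
elim: p x => [|y p IH] x xS /=; first by rewrite xS.
case/andP=> /and3P[_ _ yS] pp; rewrite xS /=; exact: IH.
Qed.

Lemma degS_pos (S : {set T}) v w : conS S -> v \in S -> w \in S -> w != v -> 0 < degS S v.
Proof.
move=> con vS wS wv; case/connectP: (con _ _ vS wS) => [[|y p]] /=.
  by move=> _ wv'; move: wv; rewrite wv' eqxx.
case/andP=> /and3P[evy _ yS] _ _; apply/card_gt0P; exists y; by rewrite inE yS.
Qed.

Lemma long_paths (S : {set T}) : (forall v, v \in S -> 2 <= degS S v) -> S != set0 ->
  forall m, exists x p, [/\ x \in S, path (rS S) x p, uniq (x :: p) & size p = m].
Proof.
move=> deg2 /set0Pn[x0 x0S]; elim=> [|m [x [p [xS pp up sp]]]].
  by exists x0, [::]; split.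
pose N := [set y in S | e x y].
have : 0 < #|N :\ head x p|.
  have := deg2 _ xS; rewrite /degS -/N (cardsD1 (head x p) N); case: (head x p \in N) => /=; lia.
case/card_gt0P => w; rewrite !inE => /andP[wh /andP[wS exw]].
case: (boolP (w \in x :: p)) => wp.
  exfalso.
  have wx : w != x by apply: contraTneq exw => ->; rewrite irr.
  move: wp; rewrite inE (negbTE wx) /=.
  case: p pp up sp wh => [|y q] //= /andP[rxy pq] uq _ wy wq.
  move: wq; rewrite inE (negbTE wy) /= => wq.
  case/splitPr: wq pq uq => q1 q2 pq uq.
  have uc : uniq (x :: rcons (y :: q1) w).
    apply: (@prefix_uniq _ _ (x :: y :: q1 ++ w :: q2)); last by rewrite /= uq.
    have -> : x :: y :: q1 ++ w :: q2 = (x :: rcons (y :: q1) w) ++ q2.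
      by rewrite -cats1 /= -catA.
    exact: prefix_prefix.
  have sc : 2 < size (x :: rcons (y :: q1) w) by rewrite /= size_rcons.
  apply: (negP (acy uc sc)).
  rewrite /= rcons_path last_rcons (sym w x) exw andbT.
  move: pq; rewrite cat_path => /andP[pq1 /= /andP[ew _]].
  rewrite rcons_path /= (rS_e ew) (rS_e rxy) andbT /=.
  exact: (sub_path (@rS_e S)).
exists w, (x :: p); split => //=.
- by rewrite /rS (sym w x) exw wS xS pp.
- by rewrite /= wp; move: up => /= ->.
- by rewrite sp.
Qed.


Lemma leaf_exists (S : {set T}) : 2 <= #|S| -> conS S -> exists2 l, l \in S & degS S l = 1.
Proof.
move=> S2 con.
have pos v : v \in S -> 0 < degS S v.
  move=> vS; have : 0 < #|S :\ v| by rewrite (cardsD1 v) vS in S2; lia.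
  case/card_gt0P=> w; rewrite !inE => /andP[wv wS]; exact: degS_pos wS wv.
case: (boolP [exists l in S, degS S l == 1]).
  by case/exists_inP=> l lS /eqP; exists l.
rewrite negb_exists_in => /forall_inP nl.
have deg2 v : v \in S -> 1 < degS S v.
  by move=> vS; have := pos _ vS; have := nl _ vS; case: (degS S v) => [|[|]].
have S0 : S != set0 by rewrite -card_gt0; lia.
have [x [p [_ _ up sp]]] := long_paths deg2 S0 #|T|.
have := max_card (mem (x :: p)).
by rewrite (card_uniqP up) /= sp ltnn.
Qed.

Lemma path_avoid (S : {set T}) l x p : l \in S -> degS S l = 1 ->
  path (rS S) x p -> uniq (x :: p) -> last x p != l -> x != l -> l \notin p.
Proof.
move=> lS dl pp up ll xl; apply/negP => lp.
case/splitPr: lp pp up ll => p1 p2.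
rewrite cat_path last_cat /= => /andP[_ /andP[ral pl]] up.
case: p2 pl up => [|b p2] /=; first by rewrite eqxx.
case/andP=> rlb _ up _.
have /cards1P [c Nc] : #|[set y in S | e l y]| == 1 by apply/eqP.
have aN : last x p1 \in [set y in S | e l y].
  by case/and3P: ral => ea aS _; rewrite inE aS sym.
have bN : b \in [set y in S | e l y] by case/and3P: rlb => ea _ bS; rewrite inE bS.
rewrite Nc !inE in aN bN.
have U : uniq ((x :: p1) ++ [:: l, b & p2]) by exact: up.
move: U; rewrite cat_uniq => /and3P[_ + _].
have bm : b \in [:: l, b & p2] by rewrite !inE eqxx orbT.
move=> /hasPn /(_ b bm).
by rewrite (eqP bN) -(eqP aN) mem_last.
Qed.

Lemma conS_remove (S : {set T}) l : conS S -> l \in S -> degS S l = 1 -> conS (S :\ l).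
Proof.
move=> con lS dl x y; rewrite !inE => /andP[xl xS] /andP[yl yS].
case/connectP: (con x y xS yS) => p pp yE; rewrite yE in yl *.
move: yl; case/shortenP: pp => p' pp' up' _ yl.
have lp := path_avoid lS dl pp' up' yl xl.
apply/connectP; exists p' => //.
apply: (@sub_in_path _ (mem (S :\ l)) (rS S)) => //.
- move=> a b aS bS /and3P[eab _ _]; by rewrite /rS eab aS bS.
  have := path_rS_in xS pp' => /allP al.
  apply/allP => z zp; change (z \in S :\ l); have zS : z \in S by exact: al _ zp.
  rewrite !inE zS andbT.
  move: zp; rewrite inE => /orP[/eqP->//|zp].
  by apply: contraNneq lp => <-.
Qed.

Lemma sum_degS m (S : {set T}) : #|S| <= m -> S != set0 -> conS S ->
  \sum_(v in S) degS S v + 2 = 2 * #|S|.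
Proof.
elim: m S => [|m IH] S.
  by rewrite leqn0 cards_eq0 => ->.
move=> Sm S0 con.
have : 0 < #|S| by rewrite card_gt0.
case: (ltnP 1 #|S|) => S2 S1.
- case: (leaf_exists S2 con) => l lS dl.
  have con' := conS_remove con lS dl.
  have cS : #|S| = #|S :\ l|.+1 by rewrite (cardsD1 l) lS.
  have S0' : S :\ l != set0 by rewrite -card_gt0; lia.
  have := IH (S :\ l) (_ : #|S :\ l| <= m) S0' con'.
  move=> /(_ ltac:(lia)) IH'.
  rewrite (big_setD1 l lS) /= dl.
  have E : forall v, v \in S :\ l -> degS S v = (e v l) + degS (S :\ l) v.
    move=> v; rewrite inE => /andP[vl vS].
    rewrite /degS (cardsD1 l) inE lS sym /=; congr (_ + _).
    by apply: eq_card => z; rewrite !inE andbA.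
  rewrite (eq_bigr _ E) big_split /=.
  have -> : \sum_(i in S :\ l) (e i l : nat) = 1.
    rewrite -big_mkcondr /= sum1_card -dl /degS; apply: eq_card => z.
    rewrite [in RHS]inE -topredE /= !inE sym; case: (eqVneq z l) => [->|]; by rewrite ?irr ?andbF.
  lia.
- have /cards1P [r Sr] : #|S| == 1 by apply/eqP; lia.
  rewrite Sr big_set1 cards1 /degS.
  have -> : [set y in [set r] | e r y] = set0.
    by apply/setP => y; rewrite !inE; case: (eqVneq y r) => [->|]; rewrite ?irr.
  by rewrite cards0.
Qed.

Lemma conS_T : connected e -> conS [set: T].
Proof.
by move=> con x y _ _; rewrite (eq_connect (e' := e)) // => a b; rewrite /rS !inE !andbT.
Qed.

Lemma degS_T v : degS [set: T] v = deg e v.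
Proof. by apply: eq_card => z; rewrite !inE. Qed.

Lemma tree_sum_deg : connected e -> 0 < #|T| -> \sum_v deg e v + 2 = 2 * #|T|.
Proof.
move=> con T0.
have T0' : [set: T] != set0 by rewrite -card_gt0 cardsT.
have := sum_degS (leqnn _) T0' (conS_T con).
rewrite cardsT => <-; congr (_ + _).
apply: eq_big => [v|v _]; [by rewrite inE | by rewrite degS_T].
Qed.

Lemma tree_deg_pos : connected e -> 1 < #|T| -> forall v, 0 < deg e v.
Proof.
move=> con T1 v.
have : 0 < #|[set: T] :\ v| by move: T1; rewrite -cardsT (cardsD1 v) inE; lia.
case/card_gt0P => w; rewrite !inE => /andP[wv _].
rewrite -degS_T; apply: (degS_pos (w := w)) => //; try exact: conS_T; by rewrite inE.
Qed.
End Count.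

Section Trees.
Variable T : finType.

Definition tree_on (S : {set T}) (e : rel T) : Prop :=
  [/\ (forall x y, e x y -> (x \in S) && (y \in S)), irreflexive e, symmetric e,
      (forall x y, x \in S -> y \in S -> connect e x y) & acyclic e].

Definition addleaf (e : rel T) (u v : T) : rel T :=
  fun a b => [|| e a b, (a == u) && (b == v) | (a == v) && (b == u)].

Lemma tree_single r : tree_on [set r] (fun _ _ => false).
Proof.
split => //.
- move=> x y; rewrite !inE => /eqP-> /eqP->; exact: connect0.
- move=> [|x [|y [|z p]]] //.
Qed.

Lemma addleaf_tree S e u v : tree_on S e -> u \in S -> v \notin S ->
  tree_on (v |: S) (addleaf e u v).
Proof.
case=> sup irr sym con acy uS vS.
have uv : u != v by apply: contraNneq vS => <-.
have ev y : e v y = false by apply/negbTE; apply: contraNN vS => /sup /andP[].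
have ev' y : e y v = false by apply/negbTE; apply: contraNN vS => /sup /andP[].
split.
- move=> x y; rewrite !inE => /or3P[/sup/andP[-> ->]|/andP[/eqP-> /eqP->]|/andP[/eqP-> /eqP->]];
  by rewrite ?eqxx ?uS ?orbT.
- move=> x; rewrite /addleaf irr /=; apply/negbTE.
  by apply/negP=> /orP[] /andP[/eqP-> /eqP] => [|/esym] /eqP; rewrite (negbTE uv).
- move=> x y; rewrite /addleaf sym.
  by case: (x == u); case: (x == v); case: (y == u); case: (y == v); rewrite ?orbT ?orbF.
- have sub : subrel (connect e) (connect (addleaf e u v)).
    apply: connect_sub => a b eab; apply: connect1; by rewrite /addleaf eab.
  have sy : connect_sym (addleaf e u v).
    apply: sym_connect_sym => a b; rewrite /addleaf sym.
    by case: (a == u); case: (a == v); case: (b == u); case: (b == v); rewrite ?orbT ?orbF.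
  have cuv : connect (addleaf e u v) v u.
    by apply: connect1; rewrite /addleaf !eqxx /= !orbT.
  move=> x y; rewrite !inE; case/orP=> [/eqP->|xS]; case/orP=> [/eqP->|yS].
  + exact: connect0.
  + apply: connect_trans cuv _; exact: sub (con _ _ uS yS).
  + rewrite sy; apply: connect_trans cuv _; exact: sub (con _ _ uS xS).
  + exact: sub (con _ _ xS yS).
- move=> p up sp; apply/negP => cp.
  case: (boolP (v \in p)) => vp.
  + case: (rot_to vp) => i q eq.
    have := cp; rewrite -(rot_cycle i) eq => cq.
    have uq : uniq (v :: q) by rewrite -eq rot_uniq.
    have sq : 2 < size (v :: q) by rewrite -eq size_rot.
    move: cq uq sq; clear eq cp; case: q => [|a [|b q]] //= cq uq _.
    case/and3P: cq => eva _; rewrite rcons_path => /andP[_ elast].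
    have au : a = u.
      by move: eva; rewrite /addleaf ev [v == u]eq_sym (negbTE uv) eqxx /= => /eqP.
    have lu : last b q = u.
      by move: elast; rewrite /addleaf ev' eqxx andbT [v == u]eq_sym (negbTE uv) andbF orbF /= => /eqP.
    move: uq => /and4P[_ + _ _].
    by rewrite au -{1}lu mem_last.
  + have := acy p up sp; rewrite (@eq_in_cycle _ [predC [:: v]] e (addleaf e u v)) ?cp //.
      move=> a b; rewrite !inE => av bv; rewrite /addleaf.
      by rewrite (negbTE bv) (negbTE av) !andbF !orbF.
    by apply/allP => a ap; rewrite !inE; apply: contraNneq vp => <-.
Qed.

Lemma addleaf_deg_in S e u v w : tree_on S e -> u \in S -> v \notin S -> w \in S ->
  deg (addleaf e u v) w = deg e w + (w == u).
Proof.
case=> sup irr sym _ _ uS vS wS.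
have wv : w != v by apply: contraNneq vS => <-.
rewrite /deg; case: (eqVneq w u) => [->|wu].
- rewrite addn1 -[X in X.+1]add0n.
  have -> : [set y | addleaf e u v u y] = v |: [set y | e u y].
    by apply/setP => y; rewrite !inE /addleaf eqxx /= (negbTE (_ : u != v)) ?andbF ?orbF 1?orbC //; apply: contraNneq vS => <-.
  rewrite cardsU1 inE.
  have -> : e u v = false by apply/negbTE; apply: contraNN vS => /sup /andP[].
  by [].
- rewrite addn0; apply: eq_card => y; rewrite !inE /addleaf.
  by rewrite (negbTE wu) (negbTE wv) /= orbF.
Qed.

Lemma addleaf_deg_v S e u v : tree_on S e -> u \in S -> v \notin S ->
  deg (addleaf e u v) v = 1.
Proof.
case=> sup _ _ _ _ uS vS.
have vu : v != u by apply: contraNneq vS => ->.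
rewrite /deg -(cards1 u); apply: eq_card => y; rewrite !inE /addleaf eqxx (negbTE vu) /=.
have -> : e v y = false by apply/negbTE; apply: contraNN vS => /sup /andP[].
by [].
Qed.


Ltac clean := repeat match goal with
 | H : is_true (_ \in _) |- _ => clear H
 | H : is_true (~~ (_ \in _)) |- _ => clear H
 | H : is_true (_ \subset _) |- _ => clear H
 | H : is_true (_ != _) |- _ => clear H
 | H : _ = _ :> {set _} |- _ => clear H
 | H : forall _, _ |- _ => clear H
 end.
Ltac flia := clean; lia.

Definition dec (d : T -> nat) w := fun t => if t == w then (d t).-1 else d t.

Record Hinv (S X : {set T}) (d : T -> nat) : Prop := HInv {
  hsub : X \subset S;
  hsum : \sum_(t in S) d t + 2 = 2 * #|S|;
  hpos : 1 < #|S| -> forall t, t \in S -> 0 < d t;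
  hX2 : #|S| != 2 -> forall t, t \in X -> 1 < d t;
  hcard : #|X| <= #|S :\: X|;
  hsXY : \sum_(t in S :\: X) d t <= \sum_(t in X) d t }.

Definition Concl (S X : {set T}) (d : T -> nat) : Prop :=
  exists e, [/\ tree_on S e, (forall v, v \in S -> deg e v = d v),
     is_vertex_cover e X & (forall Z : {set T}, is_vertex_cover e Z -> #|X| <= #|Z|)].

Lemma sum_dec_in (A : {set T}) d w : w \in A -> 0 < d w ->
  \sum_(t in A) dec d w t + 1 = \sum_(t in A) d t.
Proof.
move=> wA dw; rewrite !(big_setD1 w wA) /= {1}/dec eqxx.
have -> : \sum_(t in A :\ w) dec d w t = \sum_(t in A :\ w) d t.
  by apply: eq_bigr => t; rewrite !inE /dec => /andP[/negbTE -> _].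
lia.
Qed.

Lemma sum_dec_out (A : {set T}) d w : w \notin A ->
  \sum_(t in A) dec d w t = \sum_(t in A) d t.
Proof.
move=> wA; apply: eq_bigr => t tA; rewrite /dec.
by have -> : (t == w) = false by apply/negbTE; apply: contraNneq wA => <-.
Qed.

Lemma sum_split (S X : {set T}) f : X \subset S ->
  \sum_(t in S) f t = \sum_(t in X) f t + \sum_(t in S :\: X) f t.
Proof. by move=> XS; rewrite (big_setID X) /= (setIidPr XS). Qed.

Lemma card_split (S X : {set T}) : X \subset S -> #|S| = #|X| + #|S :\: X|.
Proof. by move=> XS; rewrite -(cardsID X S) (setIidPr XS). Qed.

Lemma sum_ge (A : {set T}) f c : (forall t, t \in A -> c <= f t) ->
  #|A| * c <= \sum_(t in A) f t.
Proof. by move=> H; rewrite -sum_nat_const; apply: leq_sum. Qed.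

Lemma cover_sub (e e' : rel T) Z : subrel e e' -> is_vertex_cover e' Z -> is_vertex_cover e Z.
Proof. by move=> sub cov x y /sub /cov. Qed.

Lemma cover_del (e : rel T) Z a : (forall b, e a b = false) -> (forall b, e b a = false) ->
  is_vertex_cover e Z -> is_vertex_cover e (Z :\ a).
Proof.
move=> h1 h2 cov x y exy; rewrite !inE.
have xa : x != a by apply: contraTneq exy => ->; rewrite h1.
have ya : y != a by apply: contraTneq exy => ->; rewrite h2.
by rewrite xa ya; exact: cov exy.
Qed.

Lemma addleaf_sub (e : rel T) u v : subrel e (addleaf e u v).
Proof. by move=> a b h; rewrite /addleaf h. Qed.

Lemma op1_H S X d x l : Hinv S X d -> 2 < #|S| -> x \in X -> 2 < d x ->
  l \in S :\: X -> d l = 1 -> #|X| < #|S :\: X| -> Hinv (S :\ l) X (dec d x).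
Proof.
case=> XS sS pS X2 cX sXY S3 xX dx lY dl XY.
have xS : x \in S by exact: (subsetP XS).
move: (lY); rewrite inE => /andP[lX lS].
have xl : x != l by apply: contraNneq lX => <-.
have YE : (S :\ l) :\: X = (S :\: X) :\ l.
  by apply/setP => t; rewrite !inE; case: (t == l); case: (t \in X).
split.
- apply/subsetP => t tX; rewrite !inE (subsetP XS _ tX) andbT.
  by apply: contraNneq lX => <-.
- have xS' : x \in S :\ l by rewrite !inE xl.
  have E := @sum_dec_in (S :\ l) d x xS' (ltac:(flia) : 0 < d x).
  move: sS; rewrite (big_setD1 l lS) dl (cardsD1 l S) lS /=; flia.
- move=> _ t; rewrite inE => /andP[tl tS]; rewrite /dec.
  case: (eqVneq t x) => [->|_]; [flia | apply: pS => //; flia].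
- move=> _ t tX; rewrite /dec.
  case: (eqVneq t x) => [->|_]; [flia | apply: X2 => //; flia].
- by rewrite YE (cardsD1 l (S :\: X)) lY /= in XY *; flia.
- rewrite YE (sum_dec_out _ (_ : x \notin (S :\: X) :\ l)); last by rewrite !inE xX andbF.
  have := sum_dec_in xX (_ : 0 < d x) => /(_ ltac:(flia)).
  move: sXY; rewrite (big_setD1 l lY) dl /=; flia.
Qed.

Lemma op1_C S X d x l : Hinv S X d -> x \in X -> 2 < d x ->
  l \in S :\: X -> d l = 1 -> Concl (S :\ l) X (dec d x) -> Concl S X d.
Proof.
case=> XS _ _ _ _ _ xX dx lY dl [e [tr dg cov mc]].
have xS : x \in S by exact: (subsetP XS).
move: (lY); rewrite inE => /andP[lX lS].
have xl : x != l by apply: contraNneq lX => <-.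
have xS' : x \in S :\ l by rewrite !inE xl.
have lS' : l \notin S :\ l by rewrite !inE eqxx.
exists (addleaf e x l); split.
- by rewrite -[in tree_on S](setD1K lS); exact: addleaf_tree.
- move=> v vS; case: (eqVneq v l) => [->|vl]; first by rewrite (addleaf_deg_v tr).
  have vS' : v \in S :\ l by rewrite !inE vl.
  rewrite (addleaf_deg_in tr) // dg // /dec.
  by case: (eqVneq v x) => [->|]; rewrite ?addn0 ?addn1 //; flia.
- move=> a b /or3P[/cov //|/andP[/eqP-> _]|/andP[_ /eqP->]]; by rewrite xX ?orbT.
- move=> Z cZ; apply: mc; exact: cover_sub (@addleaf_sub e x l) cZ.
Qed.


Lemma op2_H S X d x l w : Hinv S X d -> 2 < #|S| -> x \in X -> d x = 2 ->
  l \in S :\: X -> d l = 1 -> w \in S -> w != x -> w != l ->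
  (1 < #|S :\ l :\ x| -> 1 < d w) ->
  (w \in X -> #|S :\ l :\ x| != 2 -> 2 < d w) ->
  (w \in X -> \sum_(t in S :\: X) d t + 2 <= \sum_(t in X) d t) ->
  Hinv (S :\ l :\ x) (X :\ x) (dec d w).
Proof.
case=> XS sS pS X2 cX sXY S3 xX dx lY dl wS wx wl hb hc he.
have xS : x \in S by exact: (subsetP XS).
move: (lY); rewrite inE => /andP[lX lS].
have xl : x != l by apply: contraNneq lX => <-.
have xSl : x \in S :\ l by rewrite !inE xl.
have wS' : w \in S :\ l :\ x by rewrite !inE wx wl.
have cS : #|S| = #|S :\ l :\ x| + 2.
  by rewrite (cardsD1 l S) lS (cardsD1 x (S :\ l)) xSl; flia.
have cXx : #|X| = #|X :\ x| + 1 by rewrite (cardsD1 x X) xX; flia.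
have YE : (S :\ l :\ x) :\: (X :\ x) = (S :\: X) :\ l.
  apply/setP => t; rewrite !inE.
  case: (eqVneq t x) => [tx|tx]; first by rewrite tx xX /= ?andbF.
  by rewrite /=; case: (t == l); case: (t \in X); case: (t \in S); rewrite /= ?andbF.
have cY : #|S :\: X| = #|(S :\: X) :\ l| + 1 by rewrite (cardsD1 l (S :\: X)) lY; flia.
have dw : 0 < d w by apply: pS => //; flia.
split.
- apply/subsetP => t; rewrite !inE => /andP[tx tX]; rewrite tx (subsetP XS _ tX) andbT.
  by apply: contraNneq lX => <-.
- have E := @sum_dec_in (S :\ l :\ x) d w wS' dw.
  move: sS; rewrite (big_setD1 l lS) (big_setD1 x xSl) dl dx /=; flia.
- move=> S2 t; rewrite !inE => /and3P[tx tl tS]; rewrite /dec.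
  case: (eqVneq t w) => [->|_]; [have := hb S2; flia | apply: pS => //; flia].
- move=> S2 t; rewrite !inE => /andP[tx tX]; rewrite /dec.
  case: (eqVneq t w) => [tw|_]; [rewrite tw in tX *; have := hc tX S2; flia | apply: X2 => //; flia].
- rewrite YE; flia.
- rewrite YE; move: sXY; rewrite (big_setD1 l lY) dl (big_setD1 x xX) dx /=.
  case: (boolP (w \in X)) => wX.
  + have wX' : w \in X :\ x by rewrite !inE wx.
    have wY : w \notin (S :\: X) :\ l by rewrite !inE wX andbF.
    have E := @sum_dec_in (X :\ x) d w wX' dw.
    rewrite (sum_dec_out _ wY).
    have := he wX; rewrite (big_setD1 l lY) dl (big_setD1 x xX) dx /=; flia.
  + have wX' : w \notin X :\ x by rewrite !inE (negbTE wX) andbF.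
    have wY : w \in (S :\: X) :\ l by rewrite !inE wl wX wS.
    have E := @sum_dec_in _ d w wY dw.
    rewrite (sum_dec_out _ wX'); flia.
Qed.

Lemma op2_C S X d x l w : Hinv S X d -> x \in X -> d x = 2 ->
  l \in S :\: X -> d l = 1 -> w \in S -> w != x -> w != l ->
  Concl (S :\ l :\ x) (X :\ x) (dec d w) -> Concl S X d.
Proof.
case=> XS _ pS _ _ _ xX dx lY dl wS wx wl [e [tr dg cov mc]].
have xS : x \in S by exact: (subsetP XS).
move: (lY); rewrite inE => /andP[lX lS].
have xl : x != l by apply: contraNneq lX => <-.
have xSl : x \in S :\ l by rewrite !inE xl.
have wS' : w \in S :\ l :\ x by rewrite !inE wx wl.
have xS' : x \notin S :\ l :\ x by rewrite !inE eqxx.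
have tr1 := addleaf_tree tr wS' xS'.
have xS1 : x \in x |: (S :\ l :\ x) by rewrite !inE eqxx.
have lS1 : l \notin x |: (S :\ l :\ x) by rewrite !inE eqxx andbF orbF eq_sym.
have tr2 := addleaf_tree tr1 xS1 lS1.
have SE : l |: (x |: (S :\ l :\ x)) = S by rewrite setD1K // setD1K.
case: (tr) => sup _ _ _ _.
exists (addleaf (addleaf e w x) x l); split.
- by rewrite -SE.
- move=> v vS; case: (eqVneq v l) => [->|vl]; first by rewrite (addleaf_deg_v tr1).
  have vS1 : v \in x |: (S :\ l :\ x) by rewrite !inE vl vS /= ?andbT; case: (v == x).
  rewrite (addleaf_deg_in tr1) //.
  case: (eqVneq v x) => [->|vx].
    by rewrite (addleaf_deg_v tr wS' xS') /=; flia.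
  have vS' : v \in S :\ l :\ x by rewrite !inE vl vx.
  rewrite (addleaf_deg_in tr) // dg // /dec addn0.
  case: (eqVneq v w) => [->|]; rewrite ?addn0 ?addn1 //.
  have : 0 < d w by apply: pS => //; rewrite (cardsD1 l S) lS (cardsD1 x (S :\ l)) xSl; flia.
  flia.
- move=> a b /or3P[/or3P[/cov|/andP[_ /eqP->]|/andP[/eqP-> _]]|/andP[/eqP-> _]|/andP[_ /eqP->]];
  rewrite ?xX ?orbT //.
  by case/orP; rewrite !inE => /andP[_ ->]; rewrite ?orbT.
- move=> Z cZ.
  have cZ0 : is_vertex_cover e Z.
    apply: cover_sub cZ => a b h; apply: addleaf_sub; exact: addleaf_sub.
  have exl : addleaf (addleaf e w x) x l x l by rewrite /addleaf !eqxx /= !orbT.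
  have nS a : a \notin S :\ l :\ x -> (forall b, e a b = false) /\ (forall b, e b a = false).
    move=> aS; split=> b; apply/negbTE; apply: contraNN aS => /sup /andP[] //.
  have key a : a \in Z -> a \notin S :\ l :\ x -> #|X| <= #|Z|.
    move=> aZ aS; case: (nS a aS) => h1 h2.
    have := mc _ (cover_del h1 h2 cZ0).
    by rewrite (cardsD1 a Z) aZ (cardsD1 x X) xX; flia.
  case/orP: (cZ _ _ exl) => [xZ|lZ].
    exact: key xZ xS'.
  apply: key lZ _; by rewrite !inE eqxx andbF.
Qed.


Lemma sum_le (A : {set T}) f c : (forall t, t \in A -> f t <= c) ->
  \sum_(t in A) f t <= #|A| * c.
Proof. by move=> H; rewrite -sum_nat_const; apply: leq_sum. Qed.

Lemma deg_false v : deg (fun _ _ : T => false) v = 0.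
Proof. by rewrite /deg (_ : [set y | false] = set0) ?cards0 //; apply/setP => y; rewrite !inE. Qed.

Lemma base1 S X d : Hinv S X d -> #|S| = 1 -> Concl S X d.
Proof.
case=> XS sS pS X2 cX sXY S1.
have /cards1P [r Sr] : #|S| == 1 by apply/eqP.
have dr : d r = 0 by move: sS; rewrite Sr big_set1 cards1; flia.
have X0 : X = set0.
  apply/setP => t; rewrite inE; apply/negbTE/negP => tX.
  have := subsetP XS t tX; rewrite Sr inE => /eqP tr.
  have := X2 (ltac:(by rewrite S1)) t tX; rewrite tr dr.
  by [].
exists (fun _ _ => false); split.
- rewrite Sr; exact: tree_single.
- by move=> v; rewrite Sr inE => /eqP->; rewrite deg_false dr.
- by [].
- by move=> Z _; rewrite X0 cards0.
Qed.

Lemma base2 S X d : Hinv S X d -> #|S| = 2 -> Concl S X d.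
Proof.
case=> XS sS pS X2 cX sXY S2.
have cS := card_split XS.
have X1 : #|X| == 1.
  rewrite eqn_leq; apply/andP; split; first flia.
  rewrite card_gt0; apply/negP => /eqP X0.
  move: sXY; rewrite X0 setD0 big_set0; flia.
case/cards1P: X1 => x Xx.
have xS : x \in S by apply: (subsetP XS); rewrite Xx inE.
have /cards1P [y Sy] : #|S :\ x| == 1 by move: S2; rewrite (cardsD1 x) xS; flia.
have yS : y \in S :\ x by rewrite Sy inE.
move: (yS); rewrite !inE => /andP[yx yS'].
have SE : S = y |: [set x] by rewrite -(setD1K xS) Sy setUC.
have dx : 0 < d x by apply: pS => //; flia.
have dy : 0 < d y by apply: pS => //; flia.
have dxy : d x + d y = 2.
  by move: sS; rewrite (big_setD1 x xS) Sy big_set1 S2 /=; flia.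
have tr := tree_single x.
have xS1 : x \in [set x] by rewrite inE.
have yS1 : y \notin [set x] by rewrite inE.
exists (addleaf (fun _ _ => false) x y); split.
- rewrite SE; exact: addleaf_tree.
- move=> v; rewrite SE !inE => /orP[/eqP->|/eqP->].
  + rewrite (addleaf_deg_v tr xS1 yS1); flia.
  + rewrite (addleaf_deg_in tr xS1 yS1 xS1) deg_false eqxx; flia.
- move=> a b; rewrite /addleaf Xx !inE => /or3P[//|/andP[-> _]|/andP[_ ->]]; by rewrite ?orbT.
- move=> Z cZ; rewrite Xx cards1 card_gt0; apply/set0Pn.
  have : addleaf (fun _ _ => false) x y x y by rewrite /addleaf !eqxx.
  by case/cZ/orP => h; [exists x | exists y].
Qed.

Lemma main_ind m : forall (S X : {set T}) (d : T -> nat), #|S| <= m -> Hinv S X d -> Concl S X d.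
Proof.
elim: m => [|m IH] S X d.
  rewrite leqn0 cards_eq0 => /eqP S0 [_ sS _ _ _ _].
  by move: sS; rewrite S0 big_set0 cards0.
move=> Sm H; have H' := H; case: H => XS sS pS X2 cX sXY.
case: (ltnP 2 #|S|) => S3; last first.
  case: (posnP #|S|) => [/eqP|S0].
    rewrite cards_eq0 => /eqP S0; by move: sS; rewrite S0 big_set0 cards0.
  case: (ltnP 1 #|S|) => S2.
    by apply: base2 H' _; flia.
  by apply: base1 H' _; flia.
have pS' : forall t, t \in S -> 0 < d t by apply: pS; flia.
have X2' : forall t, t \in X -> 1 < d t by apply: X2; flia.
have cS := card_split XS.
have sS' := sum_split d XS.
have sX2 : #|X| * 2 <= \sum_(t in X) d t by apply: sum_ge.
have sY1 : #|S :\: X| * 1 <= \sum_(t in S :\: X) d t.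
  by apply: sum_ge => t; rewrite inE => /andP[_ /pS'].
have [l lY dl] : exists2 l, l \in S :\: X & d l = 1.
  case: (boolP [exists l in S :\: X, d l == 1]) => [/exists_inP[l lY /eqP dl]|]; first by exists l.
  rewrite negb_exists_in => /forall_inP nl.
  have : #|S :\: X| * 2 <= \sum_(t in S :\: X) d t.
    apply: sum_ge => t tY; have := nl t tY.
    move: tY; rewrite inE => /andP[_ /pS']; flia.
  flia.
move: (lY); rewrite inE => /andP[lX lS].
case: (boolP [exists x in X, d x == 2]) => [/exists_inP[x xX /eqP dx]|].
- have xl : x != l by apply: contraNneq lX => <-.
  have xSl : x \in S :\ l by rewrite !inE xl (subsetP XS).
  have cS' : #|S :\ l :\ x| + 2 = #|S|.
    by rewrite (cardsD1 l S) lS (cardsD1 x (S :\ l)) xSl; flia.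
  have go w : w \in S -> w != x -> w != l ->
      (1 < #|S :\ l :\ x| -> 1 < d w) ->
      (w \in X -> #|S :\ l :\ x| != 2 -> 2 < d w) ->
      (w \in X -> \sum_(t in S :\: X) d t + 2 <= \sum_(t in X) d t) -> Concl S X d.
    move=> wS wx wl hb hc he.
    apply: (op2_C H' xX dx lY dl wS wx wl); apply: IH; first flia.
    exact: op2_H H' S3 xX dx lY dl wS wx wl hb hc he.
  case: (boolP [exists w in S :\: X, 1 < d w]) => [/exists_inP[w wY dw]|].
    move: (wY); rewrite inE => /andP[wX wS].
    apply: (go w) => //.
    + by apply: contraNneq wX => ->.
    + by apply: contraTneq dw => ->; rewrite dl.
    + by rewrite (negbTE wX).
    + by rewrite (negbTE wX).
  rewrite negb_exists_in => /forall_inP nw.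
  have sY : \sum_(t in S :\: X) d t = #|S :\: X|.
    rewrite -sum1_card; apply: eq_bigr => t tY; have := nw t tY.
    move: tY; rewrite inE => /andP[_ /pS']; flia.
  case: (ltnP 1 #|X|) => X1.
  + case: (boolP [exists w in X :\ x, 2 < d w]) => [/exists_inP[w wX dw]|].
      move: (wX); rewrite !inE => /andP[wx wX'].
      apply: (go w) => //.
      * exact: (subsetP XS).
      * by apply: contraNneq lX => <-.
      * move=> _; exact: X2'.
      * move=> _; flia.
    rewrite negb_exists_in => /forall_inP nw2.
    have sX : \sum_(t in X) d t <= #|X| * 2.
      apply: sum_le => t tX; case: (eqVneq t x) => [->|tx]; first by rewrite dx.
      have := nw2 t; rewrite !inE tx tX => /(_ isT); flia.
    have : 0 < #|X :\ x| by move: X1; rewrite (cardsD1 x X) xX; flia.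
    case/card_gt0P => w; rewrite !inE => /andP[wx wX].
    apply: (go w) => //.
    * exact: (subsetP XS).
    * by apply: contraNneq lX => <-.
    * move=> _; exact: X2'.
    * move=> _; flia.
    * move=> _; flia.
  + have /cards1P [z Xz] : #|X| == 1.
      by rewrite eqn_leq X1 card_gt0; apply/set0Pn; exists x.
    have sX : \sum_(t in X) d t = 2 by rewrite Xz big_set1 -dx; move: xX; rewrite Xz inE => /eqP->.
    have : 0 < #|(S :\: X) :\ l| by move: cS; rewrite (cardsD1 l (S :\: X)) lY; flia.
    case/card_gt0P => w; rewrite !inE => /andP[wl /andP[wX wS]].
    apply: (go w) => //.
    * by apply: contraNneq wX => ->.
    * flia.
    * by rewrite (negbTE wX).
    * by rewrite (negbTE wX).
- rewrite negb_exists_in => /forall_inP nx.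
  have X3 : forall t, t \in X -> 2 < d t.
    move=> t tX; have := nx t tX; have := X2' t tX; flia.
  have sX3 : #|X| * 3 <= \sum_(t in X) d t by apply: sum_ge.
  case: (ltnP #|X| #|S :\: X|) => XY; last flia.
  case: (posnP #|X|) => [/eqP|X0].
    rewrite cards_eq0 => /eqP X0; move: sXY; rewrite X0 big_set0 setD0; flia.
  case/card_gt0P: X0 => x xX.
  apply: (op1_C H' xX (X3 x xX) lY dl); apply: IH.
    by move: Sm; rewrite (cardsD1 l S) lS; flia.
  exact: op1_H H' S3 xX (X3 x xX) lY dl XY.
Qed.

End Trees.

Theorem lemma2 (n : nat) (d : 'I_n -> nat) (X : {set 'I_n}) :
  3 <= n ->
  is_tree_degree_sequence d ->
  (forall i : 'I_n, i \in X -> 1 < d i) ->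
  2 * #|X| <= n ->
  \sum_(i in ~: X) d i <= \sum_(i in X) d i ->
  exists e : rel 'I_n,
    [/\ is_tree e, (forall v : 'I_n, deg e v = d v) & is_min_vertex_cover e X].
Proof.
move=> n3 [_ [e0 [[[irr sym] con acy] de0]]] X2 cX sXY.
have s0 := tree_sum_deg irr sym acy con (_ : 0 < #|'I_n|).
have p0 := tree_deg_pos con (_ : 1 < #|'I_n|).
rewrite card_ord in s0 p0.
have H : Hinv [set: 'I_n] X d.
  split.
  - exact: subsetT.
  - rewrite cardsT card_ord -(s0 ltac:(lia)); congr (_ + _).
    apply: eq_big => [v|v _]; [by rewrite inE | by rewrite de0].
  - by move=> _ t _; rewrite -de0; apply: p0; lia.
  - by move=> _.
  - have := cardsC X; rewrite card_ord setTD; lia.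
  - by rewrite setTD.
have [e [[sup ir sy cn ac] dg cov mc]] := main_ind (leqnn _) H.
exists e; split.
- split; [by split | | exact: ac].
  by move=> x y; apply: cn; rewrite inE.
- by move=> v; apply: dg; rewrite inE.
- by split.
Qed.
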